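(* For every real $u>1$, $$\sigma(u)=1+\sum_{0<k<u}P_k(u),\qquad \rho(u)=1+\sum_{0<k<u}(-1)^kP_k(u),$$ where the sums run over integers $k$ with $0<k<u$.
   Context: $\rho$ is the Dickman function: continuous on $[0,\infty)$, $\rho(u)=1$ on $[0,1]$, $u\rho'(u)=-\rho(u-1)$ for $u>1$. $\omega$ is the Buchstab function: continuous on $[1,\infty)$, $u\omega(u)=1$ on $[1,2]$, $u\omega'(u)=\omega(u-1)-\omega(u)$ for $u>2$; and $\sigma(u)=(u+1)\omega(u+1)$. The functions $P_k$ are defined by $P_0(u)=1$ for $u\ge 0$, and for integers $k\ge1$, $P_k:[k,\infty)\to\mathbb{R}$ is the function with $P_k(k)=0$ and $uP_k'(u)=P_{k-1}(u-1)$ for $u\ge k$, i.e. $P_k(u)=\int_k^u P_{k-1}(x-1)\,\frac{dx}{x}$. *)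

(* Defs.v *)
From Stdlib Require Import Reals Lra List.
From Coquelicot Require Import Coquelicot.
Open Scope R_scope.

Fixpoint P (k : nat) (u : R) : R :=
  match k with
  | O => 1
  | S j => RInt (fun x => P j (x - 1) / x) (INR (S j)) u
  end.

Definition sigmaB (omega : R -> R) (u : R) : R := (u + 1) * omega (u + 1).

(* Sum of f k over the integers k with 0 < k < u (for u > 0 all such k are
   <= up u, so the list 1..up u filtered by k < u enumerates them). *)
Definition sum_0_lt (u : R) (f : nat -> R) : R :=
  fold_right Rplus 0
    (map f (filter (fun k => if Rlt_dec (INR k) u then true else false)
                   (seq 1 (Z.to_nat (up u))))).

Definition cont_within (D : R -> Prop) (f : R -> R) (x : R) : Prop :=
  filterlim f (within D (locally x)) (locally (f x)).

Definition is_dickman (rho : R -> R) : Prop :=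
  (forall x, 0 <= x -> cont_within (fun y => 0 <= y) rho x) /\
  (forall x, 0 <= x <= 1 -> rho x = 1) /\
  (forall x, 1 < x -> ex_derive rho x /\ x * Derive rho x = - rho (x - 1)).

Definition is_buchstab (omega : R -> R) : Prop :=
  (forall x, 1 <= x -> cont_within (fun y => 1 <= y) omega x) /\
  (forall x, 1 <= x <= 2 -> x * omega x = 1) /\
  (forall x, 2 < x -> ex_derive omega x /\
                      x * Derive omega x = omega (x - 1) - omega x).

(* Main.v *)
Require Import Defs.

From Stdlib Require Import ZArith.
From Stdlib Require Import Lia.
From Stdlib Require Import Reals Lra List.
From Coquelicot Require Import Coquelicot.
Open Scope R_scope.

Lemma ballR (x e y : R) : ball x e y -> Rabs (y - x) < e.
Proof. intro H. exact H. Qed.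

Lemma ballR' (x e y : R) : Rabs (y - x) < e -> ball x e y.
Proof. intro H. exact H. Qed.

Definition firstP k := forall x, INR k - 1 < x -> continuous (P k) x.
Definition secondP k := forall u, INR k < u -> is_derive (P (S k)) u (P k (u-1)/u).

Lemma g_cont k y : firstP k -> INR k < y -> continuous (fun y => P k (y-1)/y) y.
Proof.
  intros Hf Hy. assert (0 <= INR k) by apply pos_INR.
  assert (Ha : continuous (fun y => P k (y-1)) y).
  { assert (H1 : continuous (fun y : R => y - 1) y).
    { apply (ex_derive_continuous (K:=R_AbsRing) (V:=R_NormedModule) (fun y => y - 1)). auto_derive. auto. }
    assert (H2 : continuous (P k) (y - 1)) by (apply Hf; lra).
    exact (continuous_comp (fun y : R => y - 1) (P k) y H1 H2). }
  assert (Hb : continuous (fun y : R => / y) y) by (apply continuous_Rinv; lra).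
  exact (continuous_mult _ _ y Ha Hb).
Qed.

Lemma second_of_first k : firstP k -> secondP k.
Proof.
  intros Hf u Hu. assert (0 <= INR k) by apply pos_INR.
  change (P (S k)) with (fun x => RInt (fun y => P k (y-1)/y) (INR (S k)) x).
  apply (is_derive_RInt (fun y => P k (y-1)/y) _ (INR (S k)) u).
  - assert (Hp : 0 < (u - INR k)/2) by lra.
    exists (mkposreal _ Hp). intros y Hy. apply ballR in Hy. simpl in Hy.
    apply (RInt_correct (V:=R_CompleteNormedModule)). apply (ex_RInt_continuous (V:=R_CompleteNormedModule)).
    intros z Hz. apply g_cont; auto.
    rewrite S_INR in Hz.
    destruct Hz as [Hz _]. apply Rabs_lt_between' in Hy.
    assert (INR k < Rmin (INR k + 1) y).
    { apply Rmin_glb_lt; lra. }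
    lra.
  - apply g_cont; auto.
Qed.

Lemma first_of_second k : secondP k -> firstP (S k).
Proof.
  intros Hs x Hx. rewrite S_INR in Hx.
  apply (ex_derive_continuous (K:=R_AbsRing) (V:=R_NormedModule)). eexists. apply Hs. lra.
Qed.

Lemma P_all k : firstP k /\ secondP k.
Proof.
  induction k.
  - assert (firstP 0). { intros x _. simpl. apply continuous_const. }
    split; auto. apply second_of_first; auto.
  - destruct IHk as [_ H]. assert (firstP (S k)) by (apply first_of_second; auto).
    split; auto. apply second_of_first; auto.
Qed.
Fixpoint Ssum (c : R) (n : nat) (u : R) : R :=
  match n with O => 0 | S m => Ssum c m u + c ^ (S m) * P (S m) u end.

Lemma P_self k : P (S k) (INR (S k)) = 0.
Proof.
  change (RInt (fun x => P k (x-1)/x) (INR (S k)) (INR (S k)) = 0).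
  exact (RInt_point (V:=R_CompleteNormedModule) _ _).
Qed.

Lemma Ssum_deriv c n u : INR n < u ->
  is_derive (Ssum c (S n)) u (c * (1 + Ssum c n (u-1)) / u).
Proof.
  assert (Hd : forall m u, INR m < u -> forall d, is_derive (Ssum c m) u d ->
     is_derive (Ssum c (S m)) u (d + c ^ (S m) * (P m (u-1)/u))).
  { intros m v Hv d Hdm.
    apply (is_derive_plus (Ssum c m) (fun x => c ^ (S m) * P (S m) x)); auto.
    apply (is_derive_scal (P (S m))). apply (proj2 (P_all m)). auto. }
  induction n; intros Hu.
  - assert (H0 : is_derive (Ssum c 0) u 0) by (apply (is_derive_const (K:=R_AbsRing) (V:=R_NormedModule))).
    pose proof (Hd 0%nat u Hu 0 H0) as H1.
    replace (c * (1 + Ssum c 0 (u - 1)) / u) with (0 + c ^ 1 * (P 0 (u - 1) / u)); auto.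
    simpl. assert (0 < u) by (simpl in Hu; lra). unfold Rdiv. rewrite Rmult_1_r, Rplus_0_l, Rplus_0_r. ring.
  - assert (Hn : INR n < u) by (rewrite S_INR in Hu; lra).
    assert (0 < u) by (pose proof (pos_INR n); lra).
    pose proof (Hd (S n) u Hu _ (IHn Hn)) as H1.
    replace (c * (1 + Ssum c (S n) (u - 1)) / u) with
      (c * (1 + Ssum c n (u - 1)) / u + c ^ S (S n) * (P (S n) (u - 1) / u)); auto.
    change (Ssum c (S n) (u-1)) with (Ssum c n (u-1) + c^(S n) * P (S n) (u-1)).
    replace (c ^ S (S n)) with (c * c ^ S n) by reflexivity. field. lra.
Qed.

Lemma cont_eps (g : R -> R) x : continuous g x ->
  forall eps, 0 < eps -> exists d, 0 < d /\ forall y, Rabs (y - x) < d -> Rabs (g y - g x) < eps.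
Proof.
  intros Hc eps He.
  destruct (proj1 (filterlim_locally g (g x)) Hc (mkposreal eps He)) as [d Hd].
  exists d. split; [apply cond_pos|]. intros y Hy. apply (Hd y). exact Hy.
Qed.

Lemma key (f : R -> R) (c : R) :
  (forall x, 0 <= x <= 1 -> f x = 1) ->
  (forall x, 1 < x -> is_derive f x (c * f (x-1) / x)) ->
  (forall x eps, 1 <= x -> 0 < eps -> exists d, 0 < d /\
      forall y, x < y < x + d -> Rabs (f y - f x) < eps) ->
  forall n u, INR n < u <= INR n + 1 -> f u = 1 + Ssum c n u.
Proof.
  intros H1 Hder Hrc n. induction n; intros u Hu.
  - simpl in *. rewrite H1; lra.
  - rewrite S_INR in Hu. set (a0 := INR n + 1).
    assert (Hn0 : 0 <= INR n) by apply pos_INR.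
    set (h := fun x => f x - (1 + Ssum c (S n) x)).
    assert (Hh' : forall x, a0 < x <= u -> is_derive h x 0).
    { intros x Hx.
      assert (E : f (x-1) = 1 + Ssum c n (x-1)) by (apply IHn; unfold a0 in *; lra).
      replace 0 with (c * f (x-1) / x - c * (1 + Ssum c n (x-1)) / x)
        by (rewrite E; field; unfold a0 in *; lra).
      apply (is_derive_minus f (fun x => 1 + Ssum c (S n) x)).
      - apply Hder. unfold a0 in *; lra.
      - replace (c * (1 + Ssum c n (x - 1)) / x) with (0 + c * (1 + Ssum c n (x - 1)) / x) by ring.
        apply (is_derive_plus (fun _ => 1) (Ssum c (S n))).
        + apply (is_derive_const (K:=R_AbsRing) (V:=R_NormedModule)).
        + apply Ssum_deriv. unfold a0 in *; lra. }
    assert (Hha0 : h a0 = 0).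
    { unfold h. rewrite (IHn a0) by (unfold a0; lra).
      change (Ssum c (S n) a0) with (Ssum c n a0 + c^(S n) * P (S n) a0).
      unfold a0. rewrite <- S_INR, P_self. ring. }
    assert (Hconst : forall a, a0 < a < u -> h u = h a).
    { intros a Ha.
      destruct (MVT_gen h a u (fun _ => 0)) as [cc [_ Hcc]].
      - intros x Hx. rewrite Rmin_left, Rmax_right in Hx by lra. apply Hh'. lra.
      - intros x Hx. rewrite Rmin_left, Rmax_right in Hx by lra.
        apply continuity_pt_filterlim.
        apply (ex_derive_continuous (K:=R_AbsRing) (V:=R_NormedModule)).
        exists 0. apply Hh'. lra.
      - lra. }
    assert (HS : continuous (Ssum c (S n)) a0).
    { apply (ex_derive_continuous (K:=R_AbsRing) (V:=R_NormedModule)).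
      eexists. apply Ssum_deriv. unfold a0; lra. }
    destruct (Req_dec (h u) 0) as [Hz|Hz].
    + unfold h in Hz. lra.
    + exfalso. set (e := Rabs (h u) / 2).
      assert (He : 0 < e) by (unfold e; pose proof (Rabs_pos_lt _ Hz); lra).
      destruct (Hrc a0 e) as [d1 [Hd1 Hf1]]; [unfold a0; lra| auto |].
      destruct (cont_eps _ _ HS e He) as [d2 [Hd2 Hf2]].
      set (a := a0 + Rmin (Rmin d1 d2) (u - a0) / 2).
      assert (Hm1 : Rmin (Rmin d1 d2) (u - a0) <= Rmin d1 d2) by apply Rmin_l.
      assert (Hm2 : Rmin (Rmin d1 d2) (u - a0) <= u - a0) by apply Rmin_r.
      assert (Hm3 : Rmin d1 d2 <= d1) by apply Rmin_l.
      assert (Hm4 : Rmin d1 d2 <= d2) by apply Rmin_r.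
      assert (Hm5 : 0 < Rmin (Rmin d1 d2) (u - a0)).
      { repeat apply Rmin_glb_lt; unfold a0 in *; lra. }
      assert (Ha : a0 < a < u) by (unfold a; lra).
      pose proof (Hconst a Ha) as Hua.
      assert (A1 : Rabs (f a - f a0) < e) by (apply Hf1; unfold a; lra).
      assert (A2 : Rabs (Ssum c (S n) a - Ssum c (S n) a0) < e).
      { apply Hf2. rewrite Rabs_pos_eq; unfold a; lra. }
      assert (A3 : Rabs (h a) < 2 * e).
      { replace (h a) with ((f a - f a0) - (Ssum c (S n) a - Ssum c (S n) a0) + h a0)
          by (unfold h; ring).
        rewrite Hha0, Rplus_0_r.
        eapply Rle_lt_trans; [apply Rabs_triang|]. rewrite Rabs_Ropp. lra. }
      rewrite <- Hua in A3. unfold e in A3. lra.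
Qed.

Lemma fold_shift (l : list R) a : fold_right Rplus a l = fold_right Rplus 0 l + a.
Proof. induction l; simpl; [ring| rewrite IHl; ring]. Qed.

Lemma fold_Ssum c n u :
  fold_right Rplus 0 (map (fun k => c ^ k * P k u) (seq 1 n)) = Ssum c n u.
Proof.
  induction n; [reflexivity|].
  rewrite seq_S, map_app, fold_right_app. cbn [map fold_right].
  rewrite fold_shift, IHn. replace (1 + n)%nat with (S n) by lia.
  change (Ssum c (S n) u) with (Ssum c n u + c^(S n) * P (S n) u). ring.
Qed.

Lemma filter_true (p : nat -> bool) l : (forall x, In x l -> p x = true) -> filter p l = l.
Proof. induction l; simpl; intros H; auto. rewrite H by auto. rewrite IHl; auto. Qed.

Lemma filter_false (p : nat -> bool) l : (forall x, In x l -> p x = false) -> filter p l = nil.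
Proof. induction l; simpl; intros H; auto. rewrite H by auto. rewrite IHl; auto. Qed.

Lemma up_nat u : 0 < u -> INR (Z.to_nat (up u)) = IZR (up u).
Proof.
  intros Hu. destruct (archimed u) as [H1 H2].
  assert (0 < up u)%Z by (apply lt_IZR; lra).
  rewrite INR_IZR_INZ, Z2Nat.id; [reflexivity | lia].
Qed.

Lemma sum_link u n f : INR n < u <= INR n + 1 ->
  sum_0_lt u f = fold_right Rplus 0 (map f (seq 1 n)).
Proof.
  intros Hu. unfold sum_0_lt. assert (Hn0 : 0 <= INR n) by apply pos_INR.
  destruct (archimed u) as [H1 H2].
  pose proof (up_nat u ltac:(lra)) as HN.
  set (N := Z.to_nat (up u)) in *.
  assert (HnN : (n < N)%nat) by (apply INR_lt; lra).
  replace N with (n + (N - n))%nat by lia.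
  rewrite seq_app, filter_app, filter_true, filter_false, app_nil_r; auto.
  - intros x Hx. apply in_seq in Hx. destruct (Rlt_dec (INR x) u) as [h|h]; auto.
    exfalso. assert (INR (S n) <= INR x) by (apply le_INR; lia). rewrite S_INR in *. lra.
  - intros x Hx. apply in_seq in Hx. destruct (Rlt_dec (INR x) u) as [h|h]; auto.
    exfalso. assert (INR x <= INR n) by (apply le_INR; lia). lra.
Qed.

Lemma find_n u : 0 < u -> exists n, INR n < u <= INR n + 1.
Proof.
  intros Hu. destruct (archimed u) as [H1 H2].
  pose proof (up_nat u Hu) as HN. set (N := Z.to_nat (up u)) in *.
  assert (Hz : (0 < up u)%Z) by (apply lt_IZR; lra).
  assert (HN1 : (1 <= N)%nat) by (unfold N; lia).
  destruct (Rlt_dec (INR N - 1) u) as [h|h].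
  - exists (N - 1)%nat. rewrite minus_INR by lia. simpl. lra.
  - assert (HN2 : (2 <= N)%nat).
    { destruct (Nat.eq_dec N 1) as [e|e]; [|lia]. rewrite e in h. simpl in h. lra. }
    exists (N - 2)%nat. rewrite minus_INR by lia. simpl. lra.
Qed.

Lemma main_gen f c u : (forall x, 0 <= x <= 1 -> f x = 1) ->
  (forall x, 1 < x -> is_derive f x (c * f (x-1) / x)) ->
  (forall x eps, 1 <= x -> 0 < eps -> exists d, 0 < d /\
      forall y, x < y < x + d -> Rabs (f y - f x) < eps) ->
  1 < u -> f u = 1 + sum_0_lt u (fun k => c ^ k * P k u).
Proof.
  intros H1 H2 H3 Hu. destruct (find_n u) as [n Hn]; [lra|].
  rewrite (sum_link u n) by auto. rewrite fold_Ssum. apply key; auto.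
Qed.

Lemma within_rc (f : R -> R) (D : R -> Prop) x : cont_within D f x ->
  forall eps, 0 < eps -> exists d, 0 < d /\ forall y, D y -> Rabs (y - x) < d -> Rabs (f y - f x) < eps.
Proof.
  intros Hc eps He.
  destruct (proj1 (filterlim_locally f (f x)) Hc (mkposreal eps He)) as [d Hd].
  exists d. split; [apply cond_pos|]. intros y Dy Hy. apply (Hd y); auto.
Qed.

Theorem mainTheorem3 (rho omega : R -> R) :
  is_dickman rho -> is_buchstab omega ->
  forall u : R, 1 < u ->
    sigmaB omega u = 1 + sum_0_lt u (fun k => P k u) /\
    rho u = 1 + sum_0_lt u (fun k => (-1) ^ k * P k u).
Proof.
  intros [Rc [R1 Rd]] [Oc [O1 Od]] u Hu. split.
  - assert (E : sum_0_lt u (fun k => P k u) = sum_0_lt u (fun k => 1 ^ k * P k u)).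
    { unfold sum_0_lt. f_equal. apply map_ext. intros k. rewrite pow1. ring. }
    rewrite E. apply (main_gen (sigmaB omega) 1); auto.
    + intros x Hx. unfold sigmaB. apply O1. lra.
    + intros x Hx. destruct (Od (x+1) ltac:(lra)) as [Hex HD].
      replace (x + 1 - 1) with x in HD by ring.
      unfold sigmaB. replace (x - 1 + 1) with x by ring.
      assert (Hid : is_derive (fun y : R => y + 1) x 1).
      { auto_derive; auto. }
      assert (Hcomp : is_derive (fun y => omega (y + 1)) x (1 * Derive omega (x+1))).
      { apply (is_derive_comp omega (fun y => y + 1)); auto. apply Derive_correct; auto. }
      pose proof (is_derive_mult (fun y => y + 1) (fun y => omega (y+1)) x 1 _ Hid Hcomp) as HM.
      replace (1 * (x * omega x) / x) with (1 * omega (x+1) + (x+1) * (1 * Derive omega (x+1))).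
      { apply HM. intros; apply Rmult_comm. }
      field_simplify_eq; [|lra]. nra.
    + intros x eps Hx He.
      set (w := omega (x+1)).
      destruct (within_rc omega _ (x+1) (Oc (x+1) ltac:(lra)) (eps / (2 * (x+3)))) as [d1 [Hd1 Hf1]].
      { apply Rdiv_lt_0_compat; lra. }
      set (d := Rmin (Rmin 1 d1) (eps / (2 * (Rabs w + 1)))).
      assert (Hw : 0 < Rabs w + 1) by (pose proof (Rabs_pos w); lra).
      assert (Hdd : 0 < d).
      { unfold d. repeat apply Rmin_glb_lt; try lra. apply Rdiv_lt_0_compat; lra. }
      exists d. split; auto. intros y Hy.
      assert (Hm1 : d <= 1) by (unfold d; eapply Rle_trans; apply Rmin_l).
      assert (Hm2 : d <= d1) by (unfold d; eapply Rle_trans; [apply Rmin_l| apply Rmin_r]).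
      assert (Hm3 : d <= eps / (2 * (Rabs w + 1))) by (unfold d; apply Rmin_r).
      unfold sigmaB. fold w.
      assert (A : Rabs (omega (y+1) - w) < eps / (2 * (x+3))).
      { apply Hf1; [lra|]. rewrite Rabs_pos_eq; lra. }
      replace ((y + 1) * omega (y + 1) - (x + 1) * w)
        with ((y+1) * (omega (y+1) - w) + (y - x) * w) by ring.
      eapply Rle_lt_trans; [apply Rabs_triang|].
      rewrite !Rabs_mult, (Rabs_pos_eq (y+1)), (Rabs_pos_eq (y-x)) by lra.
      assert (B1 : (y+1) * Rabs (omega (y+1) - w) <= (x + 3) * (eps / (2 * (x+3)))).
      { apply Rmult_le_compat; try lra; apply Rabs_pos. }
      assert (B2 : (y - x) * Rabs w <= (eps / (2 * (Rabs w + 1))) * (Rabs w + 1)).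
      { apply Rmult_le_compat; try lra; apply Rabs_pos. }
      replace ((x + 3) * (eps / (2 * (x+3)))) with (eps/2) in B1 by (field; lra).
      replace ((eps / (2 * (Rabs w + 1))) * (Rabs w + 1)) with (eps/2) in B2 by (field; lra).
      assert (Rabs (omega (y+1) - w) < eps / (2 * (x+3))) by exact A.
      assert ((y+1) * Rabs (omega (y+1) - w) < eps/2 \/ (y+1) * Rabs (omega (y+1) - w) <= eps/2) by lra.
      assert (C : (y+1) * Rabs (omega (y+1) - w) < eps / 2).
      { apply Rle_lt_trans with ((y+1) * (eps / (2 * (x+3)))).
        - apply Rmult_le_compat_l; lra.
        - replace (eps/2) with ((x+3) * (eps / (2 * (x+3)))) by (field; lra).
          apply Rmult_lt_compat_r; [apply Rdiv_lt_0_compat; lra| lra]. }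
      lra.
  - apply (main_gen rho (-1)); auto.
    + intros x Hx. destruct (Rd x Hx) as [Hex HD].
      replace (-1 * rho (x - 1) / x) with (Derive rho x).
      { apply Derive_correct; auto. }
      field_simplify_eq; lra.
    + intros x eps Hx He.
      destruct (within_rc rho _ x (Rc x ltac:(lra)) eps He) as [d [Hd Hf]].
      exists d. split; auto. intros y Hy. apply Hf; [lra|]. rewrite Rabs_pos_eq; lra.
Qed.
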